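(* Let $p\geq 1$ be an integer and let $G=\langle a,t\mid ta^pt^{-1}=a^p\rangle$ be the Baumslag--Solitar group $BS(p,p)$. Every element $x\in G$ can be written uniquely as $x=w(a,t)a^N$, where $N\in\mathbb Z$ and $w(a,t)$ is a freely reduced word belonging to $\{t,at,\ldots,a^{p-1}t,\,t^{-1},at^{-1},\ldots,a^{p-1}t^{-1}\}^*$. There exists a constant $C_1>0$ such that for every $x\in G$ with this normal form $x=w(a,t)a^N$, $$C_1(|w|+|N|)\leq \|x\|\leq |w|+|N|,$$ where $|w|$ is the number of letters of $w$ as a word over $\{a^{\pm1},t^{\pm1}\}$ and $\|x\|$ is the word length of $x$ with respect to the generating set $\{a,t\}$.
   Context: $X^*$ denotes the set of finite concatenations of words from $X$. *)

(* Defs.v *)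
(* The Baumslag--Solitar group BS(p,p) = < a, t | t a^p t^-1 = a^p >
   is modelled by its presentation: elements are words over {a^{±1}, t^{±1}}
   modulo the congruence generated by free cancellation and the defining relator. *)
From Stdlib Require Import List Arith ZArith Reals Relations ClassicalEpsilon.
Import ListNotations.

Inductive letter : Type := A | Ai | T | Ti.

Definition word := list letter.

Definition linv (x : letter) : letter :=
  match x with A => Ai | Ai => A | T => Ti | Ti => T end.

Inductive bs_rule (p : nat) : word -> word -> Prop :=
| rule_free : forall x : letter, bs_rule p [x; linv x] []
| rule_rel  : bs_rule p ([T] ++ repeat A p ++ [Ti]) (repeat A p).

Inductive bs_step (p : nat) : word -> word -> Prop :=
| step_ctx : forall u v l r, bs_rule p l r -> bs_step p (u ++ l ++ v) (u ++ r ++ v).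

Definition bs_eq (p : nat) : word -> word -> Prop := clos_refl_sym_trans word (bs_step p).

Definition apow (N : Z) : word :=
  if (0 <=? N)%Z then repeat A (Z.to_nat N) else repeat Ai (Z.to_nat (- N)).

Definition freely_reduced (w : word) : Prop :=
  forall (u v : word) (x : letter), w <> u ++ [x; linv x] ++ v.

Definition in_Xstar (p : nat) (w : word) : Prop :=
  exists blocks : list (nat * bool),
    Forall (fun b : nat * bool => fst b < p) blocks /\
    w = flat_map (fun b : nat * bool => repeat A (fst b) ++ [if snd b then T else Ti]) blocks.

Definition normal_form_word (p : nat) (w : word) : Prop :=
  in_Xstar p w /\ freely_reduced w.

Definition is_word_length (p : nat) (u : word) (n : nat) : Prop :=
  (exists v, bs_eq p v u /\ length v = n) /\ (forall v, bs_eq p v u -> n <= length v).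

Definition wlen (p : nat) (u : word) : nat :=
  epsilon (inhabits 0) (fun n => is_word_length p u n).

(* Main.v *)
Require Import Defs.
From Stdlib Require Import List Arith ZArith Reals Lia Lra Classical Relations ClassicalEpsilon.
Import ListNotations.


Section S.
Variable p : nat.

Lemma beq_refl u : bs_eq p u u. Proof. apply rst_refl. Qed.
Lemma beq_sym u v : bs_eq p u v -> bs_eq p v u. Proof. apply rst_sym. Qed.
Lemma beq_trans u v w : bs_eq p u v -> bs_eq p v w -> bs_eq p u w. Proof. apply rst_trans. Qed.

Lemma beq_ctx l r u v : bs_eq p u v -> bs_eq p (l ++ u ++ r) (l ++ v ++ r).
Proof.
  induction 1.
  - apply rst_step. destruct H as [u0 v0 l0 r0 H].
    replace (l ++ (u0 ++ l0 ++ v0) ++ r) with ((l ++ u0) ++ l0 ++ (v0 ++ r)) by (rewrite !app_assoc; reflexivity).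
    replace (l ++ (u0 ++ r0 ++ v0) ++ r) with ((l ++ u0) ++ r0 ++ (v0 ++ r)) by (rewrite !app_assoc; reflexivity).
    constructor; auto.
  - apply rst_refl.
  - apply rst_sym; auto.
  - eapply rst_trans; eauto.
Qed.

Lemma beq_l l u v : bs_eq p u v -> bs_eq p (l ++ u) (l ++ v).
Proof. intro H. pose proof (beq_ctx l [] u v H). rewrite !app_nil_r in H0. exact H0. Qed.
Lemma beq_r r u v : bs_eq p u v -> bs_eq p (u ++ r) (v ++ r).
Proof. intro H. exact (beq_ctx [] r u v H). Qed.
Lemma beq_app u u' v v' : bs_eq p u u' -> bs_eq p v v' -> bs_eq p (u ++ v) (u' ++ v').
Proof. intros; eapply beq_trans. apply beq_r; eauto. apply beq_l; auto. Qed.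

Lemma beq_rule l r : bs_rule p l r -> bs_eq p l r.
Proof.
  intro H. apply rst_step. pose proof (step_ctx p [] [] l r H). rewrite !app_nil_r in H0. exact H0.
Qed.

Lemma beq_free x : bs_eq p [x; linv x] [].
Proof. apply beq_rule. constructor. Qed.

Lemma apow_nat n : apow (Z.of_nat n) = repeat A n.
Proof. unfold apow. destruct (Z.leb_spec 0 (Z.of_nat n)); [|lia]. rewrite Nat2Z.id. auto. Qed.

Lemma apow_negnat n : apow (- Z.of_nat n) = repeat Ai n.
Proof. unfold apow. destruct n. simpl. auto.
  destruct (Z.leb_spec 0 (- Z.of_nat (S n))); [lia|]. f_equal. lia. Qed.

Lemma apow_len N : length (apow N) = Z.abs_nat N.
Proof. unfold apow. destruct (Z.leb_spec 0 N); rewrite repeat_length; lia. Qed.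

Lemma repeat_snoc {X} (x : X) n : repeat x n ++ [x] = repeat x (S n).
Proof. induction n; simpl; [reflexivity| rewrite IHn; reflexivity]. Qed.

Lemma apow_succ N : bs_eq p (apow N ++ [A]) (apow (N + 1)).
Proof.
  destruct (Z_le_gt_dec 0 N).
  - replace N with (Z.of_nat (Z.to_nat N)) by lia.
    replace (Z.of_nat (Z.to_nat N) + 1)%Z with (Z.of_nat (S (Z.to_nat N))) by lia.
    rewrite !apow_nat, repeat_snoc. apply beq_refl.
  - replace N with (- Z.of_nat (S (Z.to_nat (- N - 1))))%Z by lia.
    replace (- Z.of_nat (S (Z.to_nat (- N - 1))) + 1)%Z with (- Z.of_nat (Z.to_nat (- N - 1)))%Z by lia.
    rewrite !apow_negnat. rewrite <- repeat_snoc. rewrite <- app_assoc.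
    pose proof (beq_l (repeat Ai (Z.to_nat (- N - 1))) _ _ (beq_free Ai)). simpl in H.
    rewrite app_nil_r in H. exact H.
Qed.

Lemma apow_pred N : bs_eq p (apow N ++ [Ai]) (apow (N - 1)).
Proof.
  eapply beq_trans. apply beq_r. apply beq_sym.
  replace N with (N - 1 + 1)%Z at 1 by lia. apply apow_succ.
  rewrite <- app_assoc. pose proof (beq_l (apow (N-1)) _ _ (beq_free A)).
  rewrite app_nil_r in H. exact H.
Qed.

Lemma apow_addA M n : bs_eq p (apow M ++ repeat A n) (apow (M + Z.of_nat n)).
Proof.
  revert M; induction n; intro M.
  - simpl. rewrite app_nil_r, Z.add_0_r. apply beq_refl.
  - simpl. change (A :: repeat A n) with ([A] ++ repeat A n). rewrite app_assoc.
    eapply beq_trans. apply beq_r. apply apow_succ.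
    replace (M + Z.pos (Pos.of_succ_nat n))%Z with (M + 1 + Z.of_nat n)%Z by lia. apply IHn.
Qed.

Lemma apow_addAi M n : bs_eq p (apow M ++ repeat Ai n) (apow (M - Z.of_nat n)).
Proof.
  revert M; induction n; intro M.
  - simpl. rewrite app_nil_r, Z.sub_0_r. apply beq_refl.
  - simpl. change (Ai :: repeat Ai n) with ([Ai] ++ repeat Ai n). rewrite app_assoc.
    eapply beq_trans. apply beq_r. apply apow_pred.
    replace (M - Z.pos (Pos.of_succ_nat n))%Z with (M - 1 - Z.of_nat n)%Z by lia. apply IHn.
Qed.

Lemma apow_add M N : bs_eq p (apow M ++ apow N) (apow (M + N)).
Proof.
  destruct (Z_le_gt_dec 0 N).
  - replace N with (Z.of_nat (Z.to_nat N)) by lia. rewrite apow_nat. apply apow_addA.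
  - replace N with (- Z.of_nat (Z.to_nat (- N)))%Z by lia. rewrite apow_negnat.
    replace (M + - Z.of_nat (Z.to_nat (- N)))%Z with (M - Z.of_nat (Z.to_nat (- N)))%Z by lia.
    apply apow_addAi.
Qed.

Definition comm (g : word) (x : letter) := bs_eq p (g ++ [x]) ([x] ++ g).

Lemma comm_app g h x : comm g x -> comm h x -> comm (g ++ h) x.
Proof.
  unfold comm; intros. rewrite <- app_assoc. eapply beq_trans. apply beq_l. apply H0.
  rewrite !app_assoc. apply beq_r. auto.
Qed.

Lemma comm_inv g h x : comm g x -> bs_eq p (g ++ h) [] -> bs_eq p (h ++ g) [] -> comm h x.
Proof.
  unfold comm; intros.
  (* h x = h x (g h) = h (x g) h = h (g x) h = (h g) x h = x h *)
  eapply beq_trans. apply beq_sym.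
  pose proof (beq_l (h ++ [x]) _ _ H0). rewrite app_nil_r in H2. exact H2.
  replace ((h ++ [x]) ++ g ++ h) with (h ++ ([x] ++ g) ++ h) by (rewrite !app_assoc; auto).
  eapply beq_trans. apply beq_ctx. apply beq_sym. exact H.
  replace (h ++ (g ++ [x]) ++ h) with ((h ++ g) ++ [x] ++ h) by (rewrite !app_assoc; auto).
  pose proof (beq_r ([x] ++ h) _ _ H1). exact H2.
Qed.

Hypothesis hp : (1 <= p)%nat.

Lemma comm_Ap_T : comm (repeat A p) T.
Proof.
  unfold comm. pose proof (beq_rule _ _ (rule_rel p)).
  eapply beq_trans. apply beq_r. apply beq_sym. exact H.
  replace (([T] ++ repeat A p ++ [Ti]) ++ [T]) with (([T] ++ repeat A p) ++ [Ti; T] ++ []) by (rewrite <- !app_assoc; auto).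
  pose proof (beq_ctx ([T] ++ repeat A p) [] _ _ (beq_free Ti)). simpl in H0. rewrite !app_nil_r in H0.
  rewrite app_nil_r. exact H0.
Qed.

Lemma comm_Ap_Ti : comm (repeat A p) Ti.
Proof.
  unfold comm. pose proof (beq_rule _ _ (rule_rel p)).
  apply beq_sym. eapply beq_trans. apply beq_l. apply beq_sym. exact H.
  replace ([Ti] ++ [T] ++ repeat A p ++ [Ti]) with ([] ++ [Ti; T] ++ (repeat A p ++ [Ti])) by auto.
  pose proof (beq_ctx [] (repeat A p ++ [Ti]) _ _ (beq_free Ti)). exact H0.
Qed.

Lemma comm_Aip x : comm (repeat A p) x -> comm (repeat Ai p) x.
Proof.
  intro H. apply (comm_inv _ _ _ H).
  - rewrite <- apow_nat. eapply beq_trans. apply apow_addAi. rewrite Z.sub_diag. apply beq_refl.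
  - rewrite <- apow_negnat. eapply beq_trans. apply apow_addA.
    replace (- Z.of_nat p + Z.of_nat p)%Z with 0%Z by lia. apply beq_refl.
Qed.

Lemma comm_mult x k : comm (repeat A p) x -> comm (apow (Z.of_nat p * k)) x.
Proof.
  intro H. assert (H' := comm_Aip x H).
  assert (forall n, comm (repeat A (p * n)) x /\ comm (repeat Ai (p * n)) x).
  { induction n. rewrite Nat.mul_0_r. split; unfold comm; simpl; apply beq_refl.
    rewrite Nat.mul_succ_r, !repeat_app. destruct IHn; split; apply comm_app; auto. }
  destruct (Z_le_gt_dec 0 k).
  - replace (Z.of_nat p * k)%Z with (Z.of_nat (p * Z.to_nat k)) by lia. rewrite apow_nat. apply H0.
  - replace (Z.of_nat p * k)%Z with (- Z.of_nat (p * Z.to_nat (- k)))%Z by lia. rewrite apow_negnat. apply H0.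
Qed.

End S.

Definition tl (e : bool) : letter := if e then T else Ti.

Definition tstep (p : nat) (e : bool) (s : list (nat * bool) * Z) : list (nat * bool) * Z :=
  let (rbs, N) := s in
  let r := (N mod Z.of_nat p)%Z in
  match rbs with
  | (i, e') :: rest => if (Z.eqb r 0 && Bool.eqb e' (negb e))%bool then (rest, Z.of_nat i + N)%Z
                       else ((Z.to_nat r, e) :: rbs, N - r)%Z
  | [] => ([(Z.to_nat r, e)], N - r)%Z
  end.

Definition act (p : nat) (s : list (nat * bool) * Z) (x : letter) : list (nat * bool) * Z :=
  match x with
  | A => (fst s, snd s + 1)%Z
  | Ai => (fst s, snd s - 1)%Z
  | T => tstep p true s
  | Ti => tstep p false s
  end.

Fixpoint adj {X} (R : X -> X -> Prop) (l : list X) : Prop :=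
  match l with
  | [] => True
  | x :: t => (match t with [] => True | y :: _ => R x y end) /\ adj R t
  end.

Definition badR (x y : nat * bool) : Prop := ~ (fst x = 0 /\ snd x = negb (snd y)).
Definition valid (p : nat) (rbs : list (nat * bool)) : Prop :=
  Forall (fun b : nat * bool => fst b < p) rbs /\ adj badR rbs.

Definition renderb (b : nat * bool) : word := repeat A (fst b) ++ [if snd b then T else Ti].
Definition render (s : list (nat * bool) * Z) : word := flat_map renderb (rev (fst s)) ++ apow (snd s).
Definition eval (p : nat) (u : word) := fold_left (act p) u ([], 0%Z).

Lemma mod_small_add (P i m : Z) : (0 <= i < P)%Z -> ((i + P * m) mod P = i)%Z.
Proof. intro. rewrite Z.mul_comm, Z.mod_add by lia. apply Z.mod_small; auto. Qed.

Section S.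
Variable p : nat.
Hypothesis hp : (1 <= p)%nat.

Lemma tstep_valid e rbs N : valid p rbs -> valid p (fst (tstep p e (rbs, N))).
Proof.
  intros [HF HR]. unfold tstep.
  assert (Hm : (0 <= N mod Z.of_nat p < Z.of_nat p)%Z) by (apply Z.mod_pos_bound; lia).
  destruct rbs as [|[i e'] rest].
  - simpl. split; [constructor; [simpl; lia|constructor]| simpl; auto].
  - destruct (Z.eqb_spec (N mod Z.of_nat p) 0) as [E|E]; simpl.
    + destruct (Bool.eqb e' (negb e)) eqn:Eb; simpl.
      * inversion HF; subst. split; auto. apply HR.
      * split. constructor; [simpl; lia| auto].
        split; [|exact HR]. unfold badR; simpl. intros [H1 H2]. subst e.
        destruct e'; simpl in Eb; discriminate.
    + split. constructor; [simpl; lia| auto].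
      split; [|exact HR]. unfold badR; simpl. intros [H1 H2]. lia.
Qed.

Lemma act_valid s x : valid p (fst s) -> valid p (fst (act p s x)).
Proof. destruct s as [rbs N]; destruct x; simpl; auto; apply tstep_valid. Qed.

Lemma fold_valid l s : valid p (fst s) -> valid p (fst (fold_left (act p) l s)).
Proof. revert s; induction l; simpl; auto. intros. apply IHl. apply act_valid; auto. Qed.

Lemma fold_repA n rbs N : fold_left (act p) (repeat A n) (rbs, N) = (rbs, N + Z.of_nat n)%Z.
Proof. revert N; induction n; intros; simpl. f_equal; lia. rewrite IHn. f_equal; lia. Qed.

Lemma fold_repAi n rbs N : fold_left (act p) (repeat Ai n) (rbs, N) = (rbs, N - Z.of_nat n)%Z.
Proof. revert N; induction n; intros; simpl. f_equal; lia. rewrite IHn. f_equal; lia. Qed.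

Lemma fold_apow M rbs N : fold_left (act p) (apow M) (rbs, N) = (rbs, N + M)%Z.
Proof. unfold apow. destruct (Z.leb_spec 0 M).
  rewrite fold_repA. f_equal; lia. rewrite fold_repAi. f_equal; lia. Qed.

Lemma tstep_inv e rbs N k : valid p rbs ->
  tstep p (negb e) (let (r, M) := tstep p e (rbs, N) in (r, M + Z.of_nat p * k)%Z) = (rbs, N + Z.of_nat p * k)%Z.
Proof.
  intros [HF HR].
  set (P := Z.of_nat p).
  assert (Hm : (0 <= N mod P < P)%Z) by (apply Z.mod_pos_bound; unfold P; lia).
  assert (Hd : N = (P * (N / P) + N mod P)%Z) by (apply Z.div_mod; unfold P; lia).
  assert (Hb : forall (rbs0 : list (nat*bool)), tstep p (negb e) ((Z.to_nat (N mod P), e) :: rbs0, N - N mod P + P * k)%Z = (rbs0, N + P * k)%Z).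
  { intros. simpl. fold P.
    replace ((N - N mod P + P * k) mod P)%Z with 0%Z.
    rewrite Bool.negb_involutive, Bool.eqb_reflx. simpl. f_equal. lia.
    replace (N - N mod P + P * k)%Z with (0 + P * (N / P + k))%Z by lia.
    rewrite mod_small_add; lia. }
  unfold tstep at 2. fold P.
  destruct rbs as [|[i e'] rest].
  - apply Hb.
  - destruct (Z.eqb_spec (N mod P) 0) as [E|E]; simpl.
    + destruct (Bool.eqb e' (negb e)) eqn:Eb; simpl; [|apply Hb].
      assert (e' = negb e) by (destruct e', e; simpl in *; congruence). subst e'.
      inversion HF; subst. simpl in H1.
      assert (Hi : ((Z.of_nat i + N + P * k) mod P = Z.of_nat i)%Z).
      { replace (Z.of_nat i + N + P * k)%Z with (Z.of_nat i + P * (N / P + k))%Z by lia.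
        apply mod_small_add. unfold P; lia. }
      fold P. rewrite Hi. rewrite Bool.negb_involutive.
      destruct rest as [|[j e''] rest'].
      * f_equal. f_equal. f_equal. lia. lia.
      * destruct (Z.eqb_spec (Z.of_nat i) 0) as [Ei|Ei]; simpl.
        -- destruct (Bool.eqb e'' e) eqn:Eb2; simpl.
           ++ exfalso. destruct HR as [HR _]. apply HR. simpl. split; [lia|].
              destruct e'', e; simpl in *; congruence.
           ++ f_equal. f_equal. f_equal. lia. lia.
        -- f_equal. f_equal. f_equal. lia. lia.
    + apply Hb.
Qed.

Lemma rule_inv l r s : valid p (fst s) -> bs_rule p l r -> fold_left (act p) l s = fold_left (act p) r s.
Proof.
  destruct s as [rbs N]. intros Hv H. destruct H.
  - destruct x; cbn [fold_left act linv fst snd].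
    + f_equal; lia.
    + f_equal; lia.
    + pose proof (tstep_inv true rbs N 0 Hv). simpl negb in H. rewrite Z.mul_0_r in H.
      destruct (tstep p true (rbs, N)) as [r M]. rewrite Z.add_0_r in H. rewrite H. f_equal; lia.
    + pose proof (tstep_inv false rbs N 0 Hv). simpl negb in H. rewrite Z.mul_0_r in H.
      destruct (tstep p false (rbs, N)) as [r M]. rewrite Z.add_0_r in H. rewrite H. f_equal; lia.
  - rewrite !fold_left_app. change (fold_left (act p) [T] (rbs,N)) with (tstep p true (rbs,N)).
    pose proof (tstep_inv true rbs N 1 Hv). simpl negb in H. rewrite Z.mul_1_r in H.
    destruct (tstep p true (rbs, N)) as [r M]. rewrite !fold_repA. exact H.
Qed.

Lemma eval_inv u v : bs_eq p u v -> eval p u = eval p v.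
Proof.
  unfold eval. induction 1; auto; [|congruence].
  destruct H as [u0 v0 l r H]. rewrite !fold_left_app. f_equal.
  apply rule_inv; auto. apply fold_valid. simpl. split; constructor.
Qed.

Lemma eval_valid u : valid p (fst (eval p u)).
Proof. apply fold_valid. simpl; split; constructor. Qed.

Lemma render_tstep e s : bs_eq p (render s ++ [tl e]) (render (tstep p e s)).
Proof.
  destruct s as [rbs N].
  set (P := Z.of_nat p).
  assert (Hm : (0 <= N mod P < P)%Z) by (apply Z.mod_pos_bound; unfold P; lia).
  assert (Hd : N = (P * (N / P) + N mod P)%Z) by (apply Z.div_mod; unfold P; lia).
  assert (Hc : comm p (repeat A p) (tl e)) by (destruct e; [apply comm_Ap_T|apply comm_Ap_Ti]; auto).
  assert (Happ : bs_eq p (render (rbs, N) ++ [tl e]) (render ((Z.to_nat (N mod P), e) :: rbs, N - N mod P)%Z)).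
  { unfold render; simpl. rewrite flat_map_app. simpl. unfold renderb at 2. simpl.
    rewrite <- !app_assoc. apply beq_l.
    change (renderb (Z.to_nat (N mod P), e)) with (repeat A (Z.to_nat (N mod P)) ++ [tl e]).
    rewrite app_nil_l, <- app_assoc.
    rewrite <- apow_nat. rewrite Z2Nat.id by lia.
    eapply beq_trans. apply beq_r. apply beq_sym.
    replace N with (N mod P + (N - N mod P))%Z at 1 by lia. apply (apow_add p (N mod P) (N - N mod P)).
    rewrite <- app_assoc. apply beq_l.
    replace (N - N mod P)%Z with (P * (N / P))%Z by lia.
    destruct e; apply (comm_mult p hp); auto. }
  unfold tstep. fold P. destruct rbs as [|[i e'] rest]; [exact Happ|].
  destruct (Z.eqb_spec (N mod P) 0) as [E|E]; simpl; [|exact Happ].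
  destruct (Bool.eqb e' (negb e)) eqn:Eb; simpl; [|exact Happ].
  assert (e' = negb e) by (destruct e', e; simpl in *; congruence). subst e'.
  unfold render; simpl. rewrite flat_map_app. simpl. unfold renderb at 2. simpl.
  rewrite <- !app_assoc. apply beq_l.
  assert (HN : N = (P * (N / P))%Z) by lia.
  assert (H1 : bs_eq p (apow N ++ [tl e]) ([tl e] ++ apow N)).
  { rewrite HN. destruct e; apply (comm_mult p hp); auto. }
  change (renderb (i, negb e)) with (repeat A i ++ [tl (negb e)]).
  rewrite ?app_nil_l, <- ?app_assoc. match goal with |- ?g => idtac g end.
  apply (beq_trans p _ (repeat A i ++ [tl (negb e)] ++ [tl e] ++ apow N)).
  { apply beq_l. apply beq_l. exact H1. }
  apply (beq_trans p _ (repeat A i ++ [] ++ apow N)).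
  { apply beq_l. rewrite app_assoc. apply beq_r.
    replace ([tl (negb e)] ++ [tl e]) with [tl (negb e); linv (tl (negb e))] by (destruct e; reflexivity).
    apply beq_free. }
  rewrite app_nil_l. rewrite <- apow_nat. apply apow_add.
Qed.

Lemma render_act s x : bs_eq p (render s ++ [x]) (render (act p s x)).
Proof.
  destruct s as [rbs N]. destruct x; simpl.
  - unfold render; simpl. rewrite <- app_assoc. apply beq_l. apply apow_succ.
  - unfold render; simpl. rewrite <- app_assoc. apply beq_l. apply apow_pred.
  - apply (render_tstep true).
  - apply (render_tstep false).
Qed.

Lemma render_eval u : bs_eq p u (render (eval p u)).
Proof.
  unfold eval. induction u using rev_ind.
  - simpl. unfold render; simpl. apply beq_refl.
  - rewrite fold_left_app. simpl. eapply beq_trans. apply beq_r. exact IHu. apply render_act.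
Qed.

Lemma eval_render_blocks rbs : valid p rbs -> fold_left (act p) (flat_map renderb (rev rbs)) ([], 0%Z) = (rbs, 0%Z).
Proof.
  induction rbs as [|[i e] rest IH]; intros [HF HR]; simpl; auto.
  rewrite flat_map_app, fold_left_app. inversion HF; subst. simpl in H1.
  rewrite IH by (split; auto; apply HR). simpl. unfold renderb; simpl. rewrite app_nil_r, fold_left_app.
  rewrite fold_repA. simpl.
  assert (Hi : (Z.of_nat i mod Z.of_nat p = Z.of_nat i)%Z) by (apply Z.mod_small; lia).
  destruct e; simpl; rewrite Hi; destruct rest as [|[j e'] rest']; simpl;
    try (f_equal; [f_equal; f_equal; lia| lia]).
  - destruct (Z.eqb_spec (Z.of_nat i) 0); simpl; [|f_equal; [f_equal; f_equal; lia| lia]].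
    destruct e'; simpl; [f_equal; [f_equal; f_equal; lia| lia]|].
    exfalso. destruct HR as [HR _]. apply HR. simpl. split; [lia|auto].
  - destruct (Z.eqb_spec (Z.of_nat i) 0); simpl; [|f_equal; [f_equal; f_equal; lia| lia]].
    destruct e'; simpl; [|f_equal; [f_equal; f_equal; lia| lia]].
    exfalso. destruct HR as [HR _]. apply HR. simpl. split; [lia|auto].
Qed.

Lemma eval_render rbs N : valid p rbs -> eval p (render (rbs, N)) = (rbs, N).
Proof.
  intro Hv. unfold eval, render; simpl. rewrite fold_left_app, eval_render_blocks by auto.
  rewrite fold_apow. f_equal.
Qed.

End S.

Lemma adj_char {X} (R : X -> X -> Prop) l :
  adj R l <-> (forall B1 B2 x y, l = B1 ++ x :: y :: B2 -> R x y).
Proof.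
  split.
  - induction l as [|a t IH]; intros H B1 B2 x y E.
    + destruct B1; discriminate.
    + destruct H as [H0 H1]. destruct B1 as [|b B1]; simpl in E; inversion E; subst.
      * exact H0.
      * eapply IH; eauto.
  - induction l as [|a t IH]; intros H; simpl; auto. split.
    + destruct t as [|b t']; auto. apply (H [] t'). reflexivity.
    + apply IH. intros B1 B2 x y E. apply (H (a :: B1) B2). rewrite E. reflexivity.
Qed.

Lemma adj_rev {X} (R : X -> X -> Prop) l : adj R l -> adj (fun a b => R b a) (rev l).
Proof.
  rewrite !adj_char. intros H B1 B2 x y E. apply (H (rev B2) (rev B1)).
  rewrite <- (rev_involutive l), E. rewrite rev_app_distr. simpl. rewrite <- !app_assoc. reflexivity.
Qed.

Lemma fr_adj w : freely_reduced w <-> adj (fun x y => y <> linv x) w.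
Proof.
  rewrite adj_char. unfold freely_reduced. split.
  - intros H B1 B2 x y E Hy. subst y. apply (H B1 B2 x). exact E.
  - intros H u v x E. apply (H u v x (linv x)); auto.
Qed.

Definition fwdR (y x : nat * bool) : Prop := badR x y.

Lemma fwd_of_fr blocks : freely_reduced (flat_map renderb blocks) -> adj fwdR blocks.
Proof.
  intro H. apply adj_char. intros B1 B2 y x E [H1 H2].
  rewrite fr_adj, adj_char in H.
  apply (H (flat_map renderb B1 ++ repeat A (fst y)) (flat_map renderb B2) (if snd y then T else Ti) (if snd x then T else Ti)).
  - rewrite E, flat_map_app. simpl. unfold renderb at 1 2. destruct x as [xi xe]; simpl in *; subst xi. simpl.
    rewrite <- !app_assoc. reflexivity.
  - rewrite H2. destruct (snd y); reflexivity.
Qed.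

Lemma hd_ok_app_rep i X : hd_error X <> Some Ai -> hd_error (repeat A i ++ X) <> Some Ai.
Proof. destruct i; simpl; auto. discriminate. Qed.

Lemma adj_rep i X : adj (fun x y => y <> linv x) X -> hd_error X <> Some Ai ->
  adj (fun x y => y <> linv x) (repeat A i ++ X).
Proof.
  induction i; simpl; auto. intros. split; auto.
  destruct i; simpl.
  - destruct X; auto. simpl in H0. intro E. apply H0. subst. reflexivity.
  - discriminate.
Qed.

Lemma fr_of_fwd blocks : adj fwdR blocks ->
  adj (fun x y => y <> linv x) (flat_map renderb blocks) /\ hd_error (flat_map renderb blocks) <> Some Ai.
Proof.
  induction blocks as [|[i e] rest IH]; simpl; [split; auto; discriminate|].
  intros [H0 H1]. destruct (IH H1) as [IH1 IH2].
  change (renderb (i,e)) with (repeat A i ++ [if e then T else Ti]). rewrite <- app_assoc. simpl.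
  assert (Ht : adj (fun x y => y <> linv x) ((if e then T else Ti) :: flat_map renderb rest)).
  { simpl. split; auto.
    destruct rest as [|[j e'] rest']; simpl; auto.
    unfold renderb; simpl. destruct j; simpl.
    - unfold fwdR, badR in H0; simpl in H0. intro E. apply H0. split; auto.
      destruct e, e'; simpl in *; congruence.
    - destruct e; discriminate. }
  split.
  - apply adj_rep; auto. destruct e; discriminate.
  - apply hd_ok_app_rep. destruct e; discriminate.
Qed.

Section S.
Variable p : nat.
Hypothesis hp : (1 <= p)%nat.

Lemma nf_of_valid rbs : valid p rbs -> normal_form_word p (flat_map renderb (rev rbs)).
Proof.
  intros [HF HR]. split.
  - exists (rev rbs). split; auto. apply Forall_rev; auto.
  - apply fr_adj. apply fr_of_fwd. apply adj_rev in HR. exact HR.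
Qed.

Lemma valid_of_nf w : normal_form_word p w -> exists rbs, valid p rbs /\ w = flat_map renderb (rev rbs).
Proof.
  intros [[blocks [HF E]] Hfr]. exists (rev blocks). rewrite rev_involutive. split; auto.
  split. apply Forall_rev; auto.
  subst w. apply fwd_of_fr in Hfr. apply adj_rev in Hfr. exact Hfr.
Qed.

Lemma eval_nf w N : normal_form_word p w -> exists rbs, valid p rbs /\ w = flat_map renderb (rev rbs) /\
   eval p (w ++ apow N) = (rbs, N).
Proof.
  intro H. destruct (valid_of_nf w H) as [rbs [Hv E]]. exists rbs. split; auto. split; auto.
  subst w. apply (eval_render p hp). auto.
Qed.

Fixpoint blen (l : list (nat * bool)) : nat := match l with [] => 0 | b :: t => fst b + 1 + blen t end.

Lemma len_blocks rbs : length (flat_map renderb (rev rbs)) = blen rbs.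
Proof.
  induction rbs as [|[i e] t IH]; simpl; auto. rewrite flat_map_app, length_app, IH. simpl.
  unfold renderb; simpl. rewrite ?length_app, ?repeat_length. simpl. lia.
Qed.

Lemma len_render s : length (render s) = blen (fst s) + Z.abs_nat (snd s).
Proof. destruct s. unfold render. rewrite length_app, len_blocks, apow_len. reflexivity. Qed.

Lemma size_act s x : length (render (act p s x)) <= length (render s) + 2 * p.
Proof.
  rewrite !len_render. destruct s as [rbs N]. destruct x; simpl; try lia.
  all: set (P := Z.of_nat p); assert (Hm : (0 <= N mod P < P)%Z) by (apply Z.mod_pos_bound; unfold P; lia).
  all: destruct rbs as [|[i e'] rest]; simpl; fold P; [lia|].
  all: destruct ((N mod P =? 0)%Z && Bool.eqb e' _)%bool; simpl; lia.
Qed.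

Lemma size_fold l s : length (render (fold_left (act p) l s)) <= length (render s) + 2 * p * length l.
Proof.
  revert s; induction l; intros; simpl. lia.
  specialize (IHl (act p s a)). pose proof (size_act s a). lia.
Qed.

Lemma min_exists (P : nat -> Prop) n0 : P n0 -> exists n, P n /\ forall m, P m -> n <= m.
Proof.
  induction n0 as [n0 IH] using lt_wf_ind. intro H.
  destruct (classic (exists m, m < n0 /\ P m)) as [[m [Hm Pm]]|Hn].
  - exact (IH m Hm Pm).
  - exists n0. split; auto. intros m Pm. destruct (Nat.lt_ge_cases m n0); auto.
    exfalso; apply Hn; eauto.
Qed.

Lemma wlen_spec u : is_word_length p u (wlen p u).
Proof.
  unfold wlen. apply epsilon_spec.
  assert (H0 : exists v, bs_eq p v u /\ length v = length u) by (exists u; split; auto; apply rst_refl).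
  destruct (min_exists (fun n => exists v, bs_eq p v u /\ length v = n) (length u) H0) as [n [[v [Hv Hl]] Hmin]].
  exists n. split. eauto. intros v' Hv'. apply Hmin. eauto.
Qed.

End S.
Open Scope R_scope.

Theorem lemma3p3 (p : nat) (hp : (1 <= p)%nat) :
  (forall u : word, exists! wN : word * Z,
      normal_form_word p (fst wN) /\ bs_eq p u (fst wN ++ apow (snd wN))) /\
  (exists C1 : R, 0 < C1 /\
    forall (u w : word) (N : Z),
      normal_form_word p w -> bs_eq p u (w ++ apow N) ->
      C1 * INR (length w + Z.abs_nat N) <= INR (wlen p u) /\
      (wlen p u <= length w + Z.abs_nat N)%nat).
Proof.
  split.
  - intro u. exists (flat_map renderb (rev (fst (eval p u))), snd (eval p u)). split.
    + split. apply nf_of_valid; auto. apply eval_valid; auto. exact (render_eval p hp u).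
    + intros [w' N'] [Hnf Heq]. simpl in *.
      destruct (eval_nf p hp w' N' Hnf) as [rbs [Hv [Ew Ee]]].
      rewrite (eval_inv p hp u _ Heq), Ee. simpl. rewrite Ew. reflexivity.
  - exists (/ (2 * INR p)). split.
    { apply Rinv_0_lt_compat. apply Rmult_lt_0_compat. lra. apply lt_0_INR. lia. }
    intros u w N Hnf Heq.
    destruct (wlen_spec p u) as [[v [Hv Hl]] Hmin].
    assert (Hlen : length (w ++ apow N) = (length w + Z.abs_nat N)%nat) by (rewrite length_app, apow_len; auto).
    split.
    + destruct (eval_nf p hp w N Hnf) as [rbs [Hvd [Ew Ee]]].
      assert (Hs : eval p v = (rbs, N)).
      { rewrite (eval_inv p hp v u Hv), (eval_inv p hp u _ Heq). exact Ee. }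
      pose proof (size_fold p hp v ([], 0%Z)) as Hf. unfold eval in Hs. rewrite Hs in Hf.
      unfold render in Hf. simpl in Hf. rewrite <- Ew in Hf. rewrite Hlen in Hf.
      assert (Hle : (length w + Z.abs_nat N <= 2 * p * wlen p u)%nat) by lia.
      apply le_INR in Hle. rewrite !mult_INR in Hle. simpl (INR 2) in Hle.
      assert (HP : 0 < 2 * INR p) by (apply Rmult_lt_0_compat; [lra| apply lt_0_INR; lia]).
      apply (Rmult_le_reg_l (2 * INR p)); auto.
      rewrite <- Rmult_assoc, Rinv_r by lra. lra.
    + rewrite <- Hlen. apply Hmin. apply rst_sym. exact Heq.
Qed.
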